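(* Let $m,n,r$ be positive integers with $r\le n$, and let $S:M_r\to M_n$ be the linear map $$S(a)=\begin{pmatrix} a&0\\0&0\end{pmatrix}\in M_n,\qquad a\in M_r,$$ which places an $r\times r$ matrix in the upper-left corner of an $n\times n$ zero matrix. If a positive linear map $\phi:M_m\to M_r$ generates an exposed ray of the convex cone $\mathbb P_1[M_m,M_r]$, then $S\circ\phi:M_m\to M_n$ generates an exposed ray of the convex cone $\mathbb P_1[M_m,M_n]$.
   Context: $M_k$ denotes the algebra of $k\times k$ complex matrices. A linear map $\phi:M_m\to M_n$ is positive if it sends positive semidefinite matrices to positive semidefinite matrices; $\mathbb P_1[M_m,M_n]$ denotes the convex cone of all positive linear maps $M_m\to M_n$, regarded as a cone in the real vector space of Hermiticity-preserving linear maps $M_m\to M_n$. A nonzero $\phi$ in the cone generates an exposed ray if there is a real linear functional $f$ on that real vector space with $f\ge 0$ on the cone such that $\{\psi\in\mathbb P_1[M_m,M_n]: f(\psi)=0\}=\{\lambda\phi:\lambda\ge 0\}$. *)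

(* Defs.v *)
From HB Require Import structures.
From mathcomp Require Import all_boot all_order all_algebra.
From mathcomp Require Import complex.
Set Implicit Arguments. Unset Strict Implicit. Unset Printing Implicit Defensive.
Import Order.TTheory GRing.Theory Num.Theory.
Local Open Scope ring_scope.
Local Open Scope complex_scope.

Section Defs.
Variable R : rcfType.
Local Notation C := (R[i]).

Definition adjmx (k l : nat) (A : 'M[C]_(k, l)) : 'M[C]_(l, k) :=
  map_mx Num.conj A^T.

Definition hermitian (k : nat) (A : 'M[C]_k) : Prop := adjmx A = A.

Definition psd (k : nat) (A : 'M[C]_k) : Prop :=
  hermitian A /\ forall v : 'cV[C]_k, 0 <= (adjmx v *m A *m v) 0 0.

Definition linmap (k l : nat) (f : 'M[C]_k -> 'M[C]_l) : Prop :=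
  forall (a : C) (x y : 'M[C]_k), f (a *: x + y) = a *: f x + f y.

(* Hermiticity-preserving linear maps: the ambient real vector space *)
Definition hp_map (k l : nat) (f : 'M[C]_k -> 'M[C]_l) : Prop :=
  linmap f /\ forall x, hermitian x -> hermitian (f x).

Definition positive_map (k l : nat) (f : 'M[C]_k -> 'M[C]_l) : Prop :=
  linmap f /\ forall x, psd x -> psd (f x).

(* real linear functionals on the real vector space of Hermiticity-preserving maps
   (given as functions defined on all maps, only their values on HP maps matter) *)
Definition real_lin_functional (k l : nat)
  (F : ('M[C]_k -> 'M[C]_l) -> R) : Prop :=
  forall (a b : R) (p q : 'M[C]_k -> 'M[C]_l), hp_map p -> hp_map q ->
    F (fun x => a%:C *: p x + b%:C *: q x) = a * F p + b * F q.

Definition exposed_ray (k l : nat) (phi : 'M[C]_k -> 'M[C]_l) : Prop :=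
  positive_map phi /\ (exists x, phi x != 0) /\
  exists F : ('M[C]_k -> 'M[C]_l) -> R,
    real_lin_functional F /\
    (forall psi, positive_map psi -> 0 <= F psi) /\
    (forall psi, positive_map psi ->
       (F psi = 0 <-> exists lam : R, 0 <= lam /\ forall x, psi x = lam%:C *: phi x)).

Definition corner (r n : nat) (a : 'M[C]_r) : 'M[C]_n :=
  \matrix_(i < n, j < n)
    match (insub (val i) : option 'I_r), (insub (val j) : option 'I_r) with
    | Some i', Some j' => a i' j'
    | _, _ => 0
    end.

End Defs.

(* Main.v *)
Require Import Defs.
From HB Require Import structures.
From mathcomp Require Import all_boot all_order all_algebra.
From mathcomp Require Import complex.
From mathcomp Require Import ring.
From Stdlib Require Import FunctionalExtensionality.
Set Implicit Arguments. Unset Strict Implicit. Unset Printing Implicit Defensive.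
Import Order.TTheory GRing.Theory Num.Theory.
Local Open Scope ring_scope.

Section Aux.
Variable R : rcfType.
Local Notation C := (R[i]).

Lemma adjmxM k l p (A : 'M[C]_(k, l)) (B : 'M[C]_(l, p)) :
  adjmx (A *m B) = adjmx B *m adjmx A.
Proof. by rewrite /adjmx trmx_mul map_mxM. Qed.

Lemma adjmxK k l (A : 'M[C]_(k, l)) : adjmx (adjmx A) = A.
Proof. by apply/matrixP => i j; rewrite !mxE conjCK. Qed.

Lemma adjmxD k l (A B : 'M[C]_(k, l)) : adjmx (A + B) = adjmx A + adjmx B.
Proof. by apply/matrixP => i j; rewrite !mxE rmorphD. Qed.

Lemma adjmxZ k l (c : C) (A : 'M[C]_(k, l)) : adjmx (c *: A) = Num.conj c *: adjmx A.
Proof. by apply/matrixP => i j; rewrite !mxE rmorphM. Qed.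

Lemma adj_delta k l (a : 'I_k) (b : 'I_l) :
  adjmx (delta_mx a b : 'M[C]_(k, l)) = delta_mx b a.
Proof.
apply/matrixP => i j; rewrite !mxE.
by case: (j == a); case: (i == b); rewrite /= ?conjC1 ?conjC0.
Qed.

Lemma qf_delta k (A : 'M[C]_k) (a b : 'I_k) :
  (adjmx (delta_mx a 0 : 'cV[C]_k) *m A *m (delta_mx b 0 : 'cV[C]_k)) 0 0 = A a b.
Proof. by rewrite adj_delta -rowE -colE !mxE. Qed.

Lemma qf_delta_mx k (A : 'M[C]_k) (a b : 'I_k) :
  adjmx (delta_mx a 0 : 'cV[C]_k) *m A *m (delta_mx b 0 : 'cV[C]_k) = (A a b)%:M.
Proof. by apply/matrixP => i j; rewrite !ord1 qf_delta !mxE mulr1n. Qed.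

Lemma herm_entry k (A : 'M[C]_k) (i j : 'I_k) : Defs.hermitian A -> A i j = Num.conj (A j i).
Proof. by move=> hA; rewrite -{1}hA !mxE. Qed.

Lemma herm_conj k l (A : 'M[C]_k) (X : 'M[C]_(k, l)) :
  Defs.hermitian A -> Defs.hermitian (adjmx X *m A *m X).
Proof. by move=> hA; rewrite /Defs.hermitian !adjmxM adjmxK hA mulmxA. Qed.

Lemma psd_conj k l (A : 'M[C]_k) (X : 'M[C]_(k, l)) :
  psd A -> psd (adjmx X *m A *m X).
Proof.
case=> hA pA; split; first exact: herm_conj.
move=> v; have := pA (X *m v).
by rewrite adjmxM !mulmxA.
Qed.

Lemma psd_diag k (A : 'M[C]_k) a : psd A -> 0 <= A a a.
Proof. by case=> _ pA; have := pA (delta_mx a 0); rewrite qf_delta. Qed.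

Lemma linmap0 k l (f : 'M[C]_k -> 'M[C]_l) : linmap f -> f 0 = 0.
Proof.
move=> hf; have := hf 1 0 0; rewrite !scale1r addr0 => h.
by apply: (addrI (f 0)); rewrite addr0 -h.
Qed.

Lemma linmapZ k l (f : 'M[C]_k -> 'M[C]_l) c x : linmap f -> f (c *: x) = c *: f x.
Proof. by move=> hf; have := hf c x 0; rewrite addr0 (linmap0 hf) addr0. Qed.

Lemma linmapD k l (f : 'M[C]_k -> 'M[C]_l) x y : linmap f -> f (x + y) = f x + f y.
Proof. by move=> hf; have := hf 1 x y; rewrite !scale1r. Qed.

Lemma linmap_conj k l p (f : 'M[C]_k -> 'M[C]_l) (X : 'M[C]_(l, p)) :
  linmap f -> linmap (fun x => adjmx X *m f x *m X).
Proof.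
by move=> hf a x y /=; rewrite hf mulmxDr mulmxDl -scalemxAr -scalemxAl.
Qed.

Lemma psd_diag0 k (A : 'M[C]_k) (a : 'I_k) :
  psd A -> A a a = 0 -> forall b, A a b = 0.
Proof.
move=> pA haa b; have [<-//|nab] := eqVneq a b.
case: (eqVneq (A a b) 0) => [hz|nz]; first exact: hz.
exfalso.
have hbb : Num.conj (A b b) = A b b by rewrite -herm_entry //; case: pA.
have hba : A b a = Num.conj (A a b) by rewrite herm_entry //; case: pA.
pose c := - (A b b + 1) / 2%:R.
have cc : Num.conj c = c.
  by rewrite /c rmorphM rmorphN rmorphD /= hbb rmorph1 fmorphV /= conjC_nat.
pose al := Num.conj (c / A a b).
pose u : 'cV[C]_k := al *: delta_mx a 0 + delta_mx b 0.
have := pA.2 u.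
rewrite /u adjmxD adjmxZ !mulmxDl !mulmxDr -!scalemxAl -!scalemxAr !qf_delta_mx.
rewrite !mxE /= !mulr1n haa hba /al conjCK.
rewrite !mulr0 add0r -rmorphM /= !divfK // cc.
have h2 : (2%:R : C) != 0 by rewrite pnatr_eq0.
have -> : c + (c + A b b) = -1 by rewrite /c; field.
by rewrite oppr_ge0 ler10.
Qed.


Section Emb.
Variables (n r : nat) (hrn : (r <= n)%N).

Definition Em : 'M[C]_(n, r) := \matrix_(i < n, j < r) ((i : nat) == j)%:R.

Lemma EmulE c (B : 'M[C]_(r, c)) i j :
  (Em *m B) i j = match (insub (val i) : option 'I_r) with Some i' => B i' j | None => 0 end.
Proof.
rewrite mxE; case: insubP => [i' _ vi|ni].
  rewrite (bigD1 i') //= mxE -vi eqxx mul1r big1 ?addr0 // => k nk.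
  by rewrite mxE -vi (inj_eq val_inj) eq_sym (negbTE nk) mul0r.
apply: big1 => k _; rewrite mxE; case: eqP => [/= h|_]; last by rewrite mul0r.
by move: ni; rewrite /= h ltn_ord.
Qed.

Lemma mulEtE c (B : 'M[C]_(c, r)) i j :
  (B *m Em^T) i j = match (insub (val j) : option 'I_r) with Some j' => B i j' | None => 0 end.
Proof.
transitivity (((B *m Em^T)^T) j i); first by rewrite [RHS]mxE.
rewrite trmx_mul trmxK EmulE.
by case: insub => // j'; rewrite mxE.
Qed.

Lemma EtmulE c (B : 'M[C]_(n, c)) i j : (Em^T *m B) i j = B (widen_ord hrn i) j.
Proof.
rewrite mxE (bigD1 (widen_ord hrn i)) //= !mxE eqxx mul1r big1 ?addr0 // => k nk.
rewrite !mxE; case: eqP => [h|_]; last by rewrite mul0r.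
by case/eqP: nk; apply/val_inj.
Qed.

Lemma mulEE c (B : 'M[C]_(c, n)) i j : (B *m Em) i j = B i (widen_ord hrn j).
Proof.
transitivity (((B *m Em)^T) j i); first by rewrite [RHS]mxE.
rewrite trmx_mul EtmulE.
by rewrite mxE.
Qed.

Lemma EtE : Em^T *m Em = 1%:M.
Proof. by apply/matrixP => i j; rewrite EtmulE !mxE. Qed.

Lemma adjE : adjmx Em = Em^T.
Proof. by apply/matrixP => i j; rewrite !mxE conjC_nat. Qed.

Lemma adjEt : adjmx Em^T = Em.
Proof. by apply/matrixP => i j; rewrite !mxE conjC_nat. Qed.

Lemma cornerE (A : 'M[C]_r) : corner n A = Em *m A *m Em^T.
Proof.
apply/matrixP => i j; rewrite mulEtE mxE.
case: (insub (val j) : option 'I_r) => [j'|]; last first.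
  by case: (insub (val i) : option 'I_r).
by rewrite EmulE.
Qed.

Definition Qm (A : 'M[C]_n) : 'M[C]_r := Em^T *m A *m Em.

Lemma QmE (A : 'M[C]_n) i j : Qm A i j = A (widen_ord hrn i) (widen_ord hrn j).
Proof. by rewrite /Qm mulEE EtmulE. Qed.

Lemma Qcorner (A : 'M[C]_r) : Qm (corner n A) = A.
Proof.
by rewrite /Qm cornerE !mulmxA EtE mul1mx -mulmxA EtE mulmx1.
Qed.

Lemma corner_out (A : 'M[C]_r) (k l : 'I_n) : (r <= k)%N -> corner n A k l = 0.
Proof. by move=> hk; rewrite mxE insubN // -leqNgt. Qed.

Definition Cn (A : 'M[C]_n) := A = corner n (Qm A).

Lemma Cn_psd (A : 'M[C]_n) : psd A -> (forall k : 'I_n, (r <= k)%N -> A k k = 0) -> Cn A.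
Proof.
move=> pA h0; apply/matrixP => i j; rewrite mxE.
case: (insubP 'I_r (val i)) => [i' _ vi|ni]; case: (insubP 'I_r (val j)) => [j' _ vj|nj].
- by rewrite QmE; congr (A _ _); apply/val_inj.
- rewrite herm_entry; last by case: pA.
  by rewrite (psd_diag0 pA (h0 j _)) ?conjC0 // leqNgt.
- by rewrite (psd_diag0 pA (h0 i _)) // leqNgt.
- by rewrite (psd_diag0 pA (h0 i _)) // leqNgt.
Qed.

Lemma Cn_lin c (A B : 'M[C]_n) : Cn A -> Cn B -> Cn (c *: A + B).
Proof.
rewrite /Cn !cornerE /Qm => hA hB.
by rewrite !(mulmxDr, mulmxDl, =^~scalemxAr, =^~scalemxAl) -hA -hB.
Qed.

Lemma Cn0 : Cn 0.
Proof. by rewrite /Cn cornerE /Qm !(mulmx0, mul0mx). Qed.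


Lemma QmZ c (A : 'M[C]_n) : Qm (c *: A) = c *: Qm A.
Proof. by rewrite /Qm -scalemxAr -scalemxAl. Qed.

Lemma cornerZ c (A : 'M[C]_r) : corner n (c *: A) = c *: corner n A.
Proof. by rewrite !cornerE -scalemxAr -scalemxAl. Qed.

End Emb.

Lemma psd_outer k (u : 'cV[C]_k) : psd (u *m adjmx u).
Proof.
split; first by rewrite /Defs.hermitian adjmxM adjmxK.
move=> v.
have -> : adjmx v *m (u *m adjmx u) *m v = (adjmx v *m u) *m adjmx (adjmx v *m u)
  by rewrite adjmxM adjmxK !mulmxA.
by rewrite mxE big_ord1 !mxE mul_conjC_ge0.
Qed.

Definition ii : C := 'i.
Lemma ii2 : ii * ii = -1. Proof. by rewrite /ii -expr2 sqrCi. Qed.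
Lemma conj_ii : Num.conj ii = - ii. Proof. by rewrite /ii conjCi. Qed.

Lemma decomp_gen (F : fieldType) (j : F) (hj : j * j = -1) (h2 : (2%:R : F) != 0)
  (h8 : (8%:R : F) != 0) k (d1 d2 d3 d4 : 'M[F]_k) :
  d2 = (2%:R^-1) *: (d1 + d2 + d3 + d4) + (- (1 + j) / 8%:R) *: (d1 + d1 + d1 + d1)
   + ((- (1 + j) / 8%:R) *: (d4 + d4 + d4 + d4)
   + (j / 2%:R) *: (d1 + (- j) *: d2 + (j *: d3 + d4))).
Proof.
apply/matrixP => a b; rewrite !mxE.
move: (d1 a b) (d2 a b) (d3 a b) (d4 a b) => x1 x2 x3 x4.
transitivity (x2 + (j * j + 1) * ((x3 - x2) / 2%:R)).
  by rewrite hj addNr mul0r addr0.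
by field; rewrite h2 h8.
Qed.

Section Test.
Variable m : nat.
Definition T1 (a b : 'I_m) : 'M[C]_m :=
  let u : 'cV[C]_m := delta_mx a 0 + delta_mx b 0 in u *m adjmx u.
Definition T2 (a b : 'I_m) : 'M[C]_m :=
  let u : 'cV[C]_m := delta_mx a 0 + ii *: delta_mx b 0 in u *m adjmx u.

Lemma T1E a b : T1 a b = delta_mx a a + delta_mx a b + delta_mx b a + delta_mx b b.
Proof.
by rewrite /T1 adjmxD !adj_delta mulmxDl !mulmxDr !mul_delta_mx !addrA.
Qed.

Lemma T2E a b : T2 a b = delta_mx a a + (- ii) *: delta_mx a b + (ii *: delta_mx b a + delta_mx b b).
Proof.
rewrite /T2 adjmxD adjmxZ !adj_delta conj_ii mulmxDl !mulmxDr.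
by rewrite -!scalemxAl -!scalemxAr !mul_delta_mx scalerA mulrN ii2 opprK scale1r.
Qed.

Lemma decomp a b : delta_mx a b =
  (2%:R^-1) *: T1 a b + (- (1 + ii) / 8%:R) *: T1 a a + ((- (1 + ii) / 8%:R) *: T1 b b
   + (ii / 2%:R) *: T2 a b).
Proof.
rewrite !T1E T2E.
apply: decomp_gen; first exact: ii2.
  by rewrite pnatr_eq0.
by rewrite pnatr_eq0.
Qed.
End Test.

Section Main.
Variables (m n r : nat) (hrn : (r <= n)%N).

Lemma Cn_step (psi : 'M[C]_m -> 'M[C]_n) c x y : linmap psi ->
  Cn r (psi x) -> Cn r (psi y) -> Cn r (psi (c *: x + y)).
Proof. by move=> hl hx hy; rewrite hl; apply: Cn_lin. Qed.

Lemma Cn_add (psi : 'M[C]_m -> 'M[C]_n) x y : linmap psi ->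
  Cn r (psi x) -> Cn r (psi y) -> Cn r (psi (x + y)).
Proof. by move=> hl hx hy; have := Cn_step 1 hl hx hy; rewrite scale1r. Qed.

Lemma Cn_scale (psi : 'M[C]_m -> 'M[C]_n) c x : linmap psi ->
  Cn r (psi x) -> Cn r (psi (c *: x)).
Proof.
move=> hl hx.
have h0 : Cn r (psi 0) by rewrite (linmap0 hl); apply: Cn0.
by have := Cn_step c hl hx h0; rewrite (addr0 (c *: x)).
Qed.

Lemma Cn_span (psi : 'M[C]_m -> 'M[C]_n) : linmap psi ->
  (forall a b, Cn r (psi (T1 a b)) /\ Cn r (psi (T2 a b))) -> forall x, Cn r (psi x).
Proof.
move=> hl hT.
have hd : forall a b, Cn r (psi (delta_mx a b)).
  move=> a b; rewrite decomp.
  apply: Cn_add; first exact: hl.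
    apply: Cn_add; first exact: hl.
      by apply: Cn_scale; [exact: hl | case: (hT a b)].
    by apply: Cn_scale; [exact: hl | case: (hT a a)].
  apply: Cn_add; first exact: hl.
    by apply: Cn_scale; [exact: hl | case: (hT b b)].
  by apply: Cn_scale; [exact: hl | case: (hT a b)].
have hsum : forall (I : finType) (G : I -> 'M[C]_m), (forall i, Cn r (psi (G i))) ->
    Cn r (psi (\sum_i G i)).
  move=> I G hG; elim/big_rec: _ => [|i y _ hy].
    by rewrite (linmap0 hl); apply: Cn0.
  by apply: Cn_add; [exact: hl | exact: hG | exact: hy].
move=> x; rewrite (matrix_sum_delta x).
apply: (hsum) => a; apply: (hsum) => b.
by apply: Cn_scale; [exact: hl | exact: hd].
Qed.

Definition Dsum (psi : 'M[C]_m -> 'M[C]_n) : C :=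
  \sum_(a < m) \sum_(b < m) \sum_(k < n | (r <= k)%N) (psi (T1 a b) k k + psi (T2 a b) k k).

Lemma Dsum_ge0 psi : positive_map psi -> 0 <= Dsum psi.
Proof.
move=> [_ hp]; apply: sumr_ge0 => a _; apply: sumr_ge0 => b _; apply: sumr_ge0 => k _.
by apply: addr_ge0; apply: psd_diag; apply: hp; apply: psd_outer.
Qed.

Lemma Dsum_lin (a b : R) p q :
  Dsum (fun x => (a%:C)%C *: p x + (b%:C)%C *: q x) = (a%:C)%C * Dsum p + (b%:C)%C * Dsum q.
Proof.
rewrite /Dsum !mulr_sumr -big_split; apply: eq_bigr => a' _.
rewrite !mulr_sumr -big_split; apply: eq_bigr => b' _.
rewrite !mulr_sumr -big_split; apply: eq_bigr => k _.
rewrite !mxE /= !mulrDr -!addrA; congr (_ + _); exact: addrCA.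
Qed.

End Main.
End Aux.

Lemma Re_lin (R : rcfType) (a b : R) (z w : R[i]) :
  complex.Re ((a%:C)%C * z + (b%:C)%C * w) = a * complex.Re z + b * complex.Re w.
Proof. by case: z => x1 y1; case: w => x2 y2 /=; rewrite !mul0r !subr0. Qed.

Lemma Re_ge0 (R : rcfType) (z : R[i]) : 0 <= z -> 0 <= complex.Re z.
Proof. by rewrite lecE => /andP[]. Qed.

Lemma ge0_Re0 (R : rcfType) (z : R[i]) : 0 <= z -> complex.Re z = 0 -> z = 0.
Proof.
case: z => x y; rewrite lecE /= => /andP[/eqP hy _] hx.
by rewrite hx hy.
Qed.

Lemma corner_outZ (R : rcfType) (n r : nat) (c : R[i]) (A : 'M[R[i]]_r) (k l : 'I_n) :
  (r <= k)%N -> (c *: corner n A) k l = 0.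
Proof. by move=> hk; rewrite mxE corner_out // mulr0. Qed.

Unset Implicit Arguments.

Theorem proposition2p1 (R : rcfType) (m n r : nat)
  (hm : (0 < m)%N) (hn : (0 < n)%N) (hr : (0 < r)%N) (hrn : (r <= n)%N)
  (phi : 'M[R[i]]_m -> 'M[R[i]]_r) :
  exposed_ray phi -> exposed_ray (fun x => corner n (phi x)).
Proof.
move=> [posphi [[x0 hx0] [F [Flin [Fge Fzero]]]]].
have PQ : forall psi : 'M[R[i]]_m -> 'M[R[i]]_n, positive_map psi ->
    positive_map (fun x => Qm r (psi x)).
  move=> psi [hl hp]; split.
    by have := linmap_conj (@Em R n r) hl; rewrite adjE.
  by move=> x px; have := psd_conj (@Em R n r) (hp x px); rewrite adjE.
have HQ : forall psi : 'M[R[i]]_m -> 'M[R[i]]_n, hp_map psi ->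
    hp_map (fun x => Qm r (psi x)).
  move=> psi [hl hp]; split.
    by have := linmap_conj (@Em R n r) hl; rewrite adjE.
  by move=> x px; have := herm_conj (@Em R n r) (hp x px); rewrite adjE.
split.
  split.
    move=> a x y /=; rewrite posphi.1 !(cornerE n) mulmxDr mulmxDl -scalemxAr -scalemxAl //.
  move=> x px; rewrite (cornerE n).
  by have := psd_conj (@Em R n r)^T (posphi.2 x px); rewrite adjEt.
split.
  exists x0; apply: contra hx0 => /eqP h.
  by rewrite -(Qcorner hrn (phi x0)) h /Qm mulmx0 mul0mx.
exists (fun psi => F (fun x => Qm r (psi x)) + complex.Re (Dsum r psi)).
split.
  move=> a b p q hp hq /=.
  have -> : (fun x => Qm r ((a%:C)%C *: p x + (b%:C)%C *: q x)) =
            (fun x => (a%:C)%C *: Qm r (p x) + (b%:C)%C *: Qm r (q x)).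
    by apply: functional_extensionality => x; rewrite /Qm mulmxDr mulmxDl -!scalemxAr -!scalemxAl.
  rewrite (Flin a b _ _ (HQ p hp) (HQ q hq)) Dsum_lin Re_lin.
  by rewrite mulrDr mulrDr addrACA.
split.
  move=> psi hpsi; apply: addr_ge0; first exact: Fge (PQ psi hpsi).
  exact: Re_ge0 (Dsum_ge0 r hpsi).
move=> psi hpsi; split.
  move=> /eqP; rewrite paddr_eq0; last first.
      exact: Re_ge0 (Dsum_ge0 r hpsi).
    exact: Fge (PQ psi hpsi).
  move=> /andP[/eqP hF /eqP hD].
  have hD0 := ge0_Re0 (Dsum_ge0 r hpsi) hD.
  have hT : forall (a b : 'I_m) (k : 'I_n), (r <= k)%N -> psi (@T1 R m a b) k k = 0 /\ psi (@T2 R m a b) k k = 0.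
    move=> a b k hk.
    have hps : forall M, psd M -> psd (psi M) by case: hpsi.
    have n3 : forall (a b : 'I_m) (k : 'I_n), (r <= k)%N ->
        0 <= psi (@T1 R m a b) k k + psi (@T2 R m a b) k k.
      by move=> a' b' k' _; apply: addr_ge0; apply: psd_diag; apply: hps; apply: psd_outer.
    have n2 : forall (a b : 'I_m), 0 <= \sum_(k < n | (r <= k)%N) (psi (@T1 R m a b) k k + psi (@T2 R m a b) k k).
      by move=> a' b'; apply: sumr_ge0 => k' hk'; apply: n3.
    have n1 : forall (a : 'I_m), 0 <= \sum_(b < m) \sum_(k < n | (r <= k)%N) (psi (@T1 R m a b) k k + psi (@T2 R m a b) k k).
      by move=> a'; apply: sumr_ge0 => b' _; apply: n2.
    have g1 := psumr_eq0P (fun a' _ => n1 a') hD0 (i:=a) isT.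
    have g2 := psumr_eq0P (fun b' _ => n2 a b') g1 (i:=b) isT.
    have g3 := psumr_eq0P (fun k' hk' => n3 a b k' hk') g2 (i:=k) hk.
    move/eqP: g3; rewrite paddr_eq0; first by move=> /andP[/eqP -> /eqP ->].
      by apply: psd_diag; apply: hps; apply: psd_outer.
    by apply: psd_diag; apply: hps; apply: psd_outer.
  have hps : forall M, psd M -> psd (psi M) by case: hpsi.
  have hC : forall x, Cn r (psi x).
    apply: Cn_span; first by case: hpsi.
    move=> a b; split; apply: (Cn_psd hrn).
    - by apply: hps; apply: psd_outer.
    - by move=> k hk; case: (hT a b k hk).
    - by apply: hps; apply: psd_outer.
    - by move=> k hk; case: (hT a b k hk).
  have [lam [hl0 hlam]] := (Fzero _ (PQ psi hpsi)).1 hF.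
  exists lam; split => // x.
  by rewrite (hC x) hlam cornerZ.
move=> [lam [hl0 hlam]].
have hQ : F (fun x => Qm r (psi x)) = 0.
  apply/(Fzero _ (PQ psi hpsi)); exists lam; split => // x.
  by rewrite hlam QmZ (Qcorner hrn).
have hD' : Dsum r psi = 0.
  rewrite /Dsum; apply: big1 => a _; apply: big1 => b _; apply: big1 => k hk.
  by rewrite !hlam !corner_outZ // addr0.
by rewrite hQ hD' /= add0r.
Qed.
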